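(* For every positive integer $n$, as formal power series in $z$, \[ \sum_{k \geq 0} \overline{{ n+k-1 \brack k}}_{q,t} z^k q^k = \sum_{k \geq 0} \frac{z^k q^{k^2+k} (-t zq^2;q)_{k}}{(zq;q)_{k+1}} \left( \overline{{ n-1 \brack k}}_{q,t} +t z q^{2k+2} \overline{{ n-2 \brack k}}_{q,t} \right). \]
   Context: An overpartition is a partition in which the last occurrence of each distinct part size may be overlined; its weight $|\lambda|$ is the sum of its parts. For integers $a,b$ with $0\le b\le a$, $\overline{{a \brack b}}_{q,t}=\sum_{\lambda} t^{\#_o(\lambda)} q^{|\lambda|}$, the sum over all overpartitions $\lambda$ with largest part at most $a-b$ and at most $b$ parts, $\#_o(\lambda)$ being the number of overlined parts; for all other integer pairs $(a,b)$ it is $0$. Notation: $(x;q)_k=\prod_{j=1}^{k}(1-xq^{j-1})$, $(x;q)_0=1$. *)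

(* Defs.v *)
From HB Require Import structures.
From mathcomp Require Import all_boot all_order all_algebra.
Set Implicit Arguments. Unset Strict Implicit. Unset Printing Implicit Defensive.
Import Order.TTheory GRing.Theory Num.Theory.
Local Open Scope ring_scope.

(* An overpartition with at most b parts, all parts <= m, is encoded as a
   b-tuple of (part, overlined?) pairs listed in nonincreasing order of the
   parts, padded at the end with entries of part 0 (which are not overlined).
   Only the last occurrence of a part size may be overlined: an overlined
   entry must be followed (if anything follows) by a strictly smaller part. *)
Definition ovp_part (b m : nat) (f : {ffun 'I_b -> 'I_m.+1 * bool}) (i : nat) : nat :=
  match insub i with Some j => nat_of_ord (f j).1 | None => 0%N end.

Definition ovp_valid (b m : nat) (f : {ffun 'I_b -> 'I_m.+1 * bool}) : bool :=
  [forall i : 'I_b,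
     [&& (ovp_part f i.+1 <= ovp_part f i)%N,
         ((f i).2 ==> (0 < ovp_part f i)%N) &
         ((f i).2 ==> (ovp_part f i.+1 < ovp_part f i)%N)]].

Definition ovp_weight (b m : nat) (f : {ffun 'I_b -> 'I_m.+1 * bool}) : nat :=
  (\sum_(i < b) nat_of_ord (f i).1)%N.
Definition ovp_nover (b m : nat) (f : {ffun 'I_b -> 'I_m.+1 * bool}) : nat :=
  (\sum_(i < b) nat_of_bool (f i).2)%N.

Definition ovbin (R : comUnitRingType) (q t : R) (a b : int) : R :=
  if (0 <= b) && (b <= a) then
    \sum_(f : {ffun 'I_`|b|%N -> 'I_(`|a - b|%N).+1 * bool} | ovp_valid f)
       t ^+ ovp_nover f * q ^+ ovp_weight f
  else 0.

Definition fps (R : comUnitRingType) := nat -> R.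

Section FPS.
Variable R : comUnitRingType.

Definition fps_c (c : R) : fps R := fun n => if n == 0%N then c else 0.
Definition fps_z : fps R := fun n => (n == 1%N)%:R.
Definition fps_add (f g : fps R) : fps R := fun n => f n + g n.
Definition fps_opp (f : fps R) : fps R := fun n => - f n.
Definition fps_mul (f g : fps R) : fps R :=
  fun n => \sum_(i < n.+1) f i * g (n - i)%N.
Definition fps_exp (f : fps R) (k : nat) : fps R := iter k (fps_mul f) (fps_c 1).

(* multiplicative inverse of a series whose constant term is a unit *)
Fixpoint fps_inv_seq (f : fps R) (n : nat) : seq R :=
  match n with
  | 0 => [:: (f 0%N)^-1]
  | n'.+1 => let s := fps_inv_seq f n' in
      rcons s (- (f 0%N)^-1 * \sum_(i < n'.+1) f i.+1 * nth 0 s (n' - i)%N)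
  end.
Definition fps_inv (f : fps R) : fps R := fun n => nth 0 (fps_inv_seq f n) n.

Definition qpoch (x : fps R) (q : R) (k : nat) : fps R :=
  foldr (fun j acc => fps_mul (fps_add (fps_c 1)
                        (fps_opp (fps_mul (fps_c (q ^+ j)) x))) acc)
        (fps_c 1) (iota 0 k).

(* Sum over k >= 0 of series F k, where F k has z-adic valuation >= k
   (true for both sides of the theorem): the coefficient of z^N is the
   finite sum of the coefficients of z^N in F 0, ..., F N. *)
Definition fps_sum (F : nat -> fps R) : fps R :=
  fun N => \sum_(k < N.+1) F k N.
End FPS.
Arguments fps_z {R}.

(* Main.v *)
Require Import Defs.
From HB Require Import structures.
From mathcomp Require Import all_boot all_order all_algebra.
From mathcomp Require Import ring zify.
Set Implicit Arguments. Unset Strict Implicit. Unset Printing Implicit Defensive.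
Import Order.TTheory GRing.Theory Num.Theory.
Local Open Scope ring_scope.

Section Comb.
Variables (R : comUnitRingType) (q t : R).

Fixpoint Pr_ (b M : nat) : R :=
  if b is b'.+1 then
    \sum_(p < M.+1) q ^+ p * (Pr_ b' p + t * (if (p : nat) is p'.+1 then Pr_ b' p' else 0))
  else 1.
Definition Pr M b := Pr_ b M.
Definition Qr M b := if M is M'.+1 then Pr M' b else 0.

Lemma Pr0b b : Pr 0 b = 1.
Proof. rewrite /Pr; elim: b => [|b IH] //=; by rewrite big_ord1 /= expr0 mul1r mulr0 addr0 IH. Qed.

Lemma PrS M b : Pr M.+1 b.+1 = Pr M b.+1 + q ^+ M.+1 * (Pr M.+1 b + t * Pr M b).
Proof. by rewrite /Pr /= big_ord_recr. Qed.

Lemma PrM0 M : Pr M 0 = 1. Proof. by []. Qed.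

Section Fun.
Variables (b m : nat).
Notation T := ('I_m.+1 * bool)%type.

Definition hcons (x : T) (g : {ffun 'I_b -> T}) : {ffun 'I_b.+1 -> T} :=
  [ffun i => if unlift ord0 i is Some j then g j else x].

Lemma hcons0 x g : hcons x g ord0 = x.
Proof. by rewrite ffunE unlift_none. Qed.
Lemma hconsS x g j : hcons x g (lift ord0 j) = g j.
Proof. by rewrite ffunE liftK. Qed.

Lemma part_ord n (f : {ffun 'I_n -> T}) (i : 'I_n) : ovp_part f i = (f i).1.
Proof. by rewrite /ovp_part valK. Qed.
Lemma part_ge n (f : {ffun 'I_n -> T}) i : (n <= i)%N -> ovp_part f i = 0%N.
Proof. by move=> h; rewrite /ovp_part insubF // ltnNge h. Qed.

Lemma part_hcons0 x g : ovp_part (hcons x g) 0 = x.1.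
Proof. by rewrite -[0%N]/(nat_of_ord (ord0 : 'I_b.+1)) part_ord hcons0. Qed.

Lemma part_hconsS x g i : ovp_part (hcons x g) i.+1 = ovp_part g i.
Proof.
case: (ltnP i b) => h.
  have -> : i.+1 = lift ord0 (Ordinal h) by rewrite lift0.
  by rewrite part_ord hconsS -[i]/(nat_of_ord (Ordinal h)) part_ord.
by rewrite !part_ge.
Qed.

Lemma valid_hcons x g : ovp_valid (hcons x g) =
  [&& ovp_valid g, (ovp_part g 0 <= x.1)%N, x.2 ==> (0 < x.1)%N & x.2 ==> (ovp_part g 0 < x.1)%N].
Proof.
apply/idP/idP.
  move/forallP => H.
  have := H ord0; rewrite hcons0 /= part_hcons0 part_hconsS => /and3P [h1 h2 h3].
  rewrite h1 h2 h3 !andbT; apply/forallP => j.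
  by have := H (lift ord0 j); rewrite hconsS lift0 !part_hconsS.
case/and4P => /forallP Hg H1 H2 H3; apply/forallP => i.
case: (unliftP ord0 i) => [j ->|->].
  by rewrite hconsS lift0 !part_hconsS; apply: Hg.
by rewrite hcons0 /= part_hcons0 part_hconsS H1 H2 H3.
Qed.

Lemma weight_hcons x g : ovp_weight (hcons x g) = (x.1 + ovp_weight g)%N.
Proof.
rewrite /ovp_weight big_ord_recl hcons0; congr (_ + _)%N.
by apply: eq_bigr => j _; rewrite hconsS.
Qed.
Lemma nover_hcons x g : ovp_nover (hcons x g) = (x.2 + ovp_nover g)%N.
Proof.
rewrite /ovp_nover big_ord_recl hcons0; congr (_ + _)%N.
by apply: eq_bigr => j _; rewrite hconsS.
Qed.

Lemma sum_ffunS (F : {ffun 'I_b.+1 -> T} -> R) (P : pred {ffun 'I_b.+1 -> T}) :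
  \sum_(f | P f) F f = \sum_(x : T) \sum_(g | P (hcons x g)) F (hcons x g).
Proof.
rewrite pair_big_dep /=.
rewrite (reindex (fun p : T * {ffun 'I_b -> T} => hcons p.1 p.2)) /=.
  by apply: eq_bigl => p.
apply: onW_bij.
exists (fun f : {ffun 'I_b.+1 -> T} => (f ord0, [ffun j => f (lift ord0 j)])).
  move=> [x g] /=; rewrite hcons0; congr (_, _); apply/ffunP => j.
  by rewrite ffunE hconsS.
move=> f; apply/ffunP => i; rewrite ffunE.
by case: (unliftP ord0 i) => [j ->|->]; rewrite ?liftK ?unlift_none ?ffunE.
Qed.
End Fun.

Definition Cs b m p := \sum_(f : {ffun 'I_b -> 'I_m.+1 * bool} | ovp_valid f && (ovp_part f 0 <= p)%N)
   t ^+ ovp_nover f * q ^+ ovp_weight f.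


Lemma Cs0 m p : Cs 0 m p = 1.
Proof.
rewrite /Cs (eq_bigl xpredT); last first.
  move=> f /=; rewrite part_ge // andbT; apply/forallP => -[i hi] //.
rewrite (eq_bigr (fun _ => 1)); last by move=> f _; rewrite /ovp_nover /ovp_weight !big_ord0 mulr1.
by rewrite sumr_const card_ffun card_ord expn0.
Qed.

Lemma Cs_Pr b m p : Cs b m p = Pr (minn m p) b.
Proof.
elim: b m p => [|b IH] m p; first by rewrite Cs0.
rewrite /Cs sum_ffunS.
have E (x : ('I_m.+1 * bool)%type) :
  \sum_(g : {ffun 'I_b -> ('I_m.+1 * bool)%type} | ovp_valid (hcons x g) && (ovp_part (hcons x g) 0 <= p)%N)
     t ^+ ovp_nover (hcons x g) * q ^+ ovp_weight (hcons x g) =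
  if (x.1 <= p)%N then q ^+ x.1 * (if x.2 then t * (if (x.1 : nat) is p'.+1 then Pr p' b else 0)
                                   else Pr x.1 b) else 0.
  case: x => [[i hi] o] /=.
  under eq_bigr => g _ do rewrite weight_hcons nover_hcons !exprD /= mulrACA.
  rewrite -mulr_sumr.
  under eq_bigl => g do rewrite valid_hcons part_hcons0 /=.
  case: (leqP i p) => hip; last first.
    by rewrite big_pred0 ?mulr0 // => g; rewrite andbF.
  have him : (i <= m)%N by rewrite -ltnS.
  case: o => /=.
    case: i hi hip him => [|p'] hi hip him /=.
      by rewrite big_pred0 ?mulr0 // => g /=; rewrite ?ltnn ?andbF.
    rewrite (eq_bigl (fun g => ovp_valid g && (ovp_part g 0 <= p')%N)); last first.
      move=> g; rewrite andbT ltnS; case h: (ovp_part g 0 <= p')%N; rewrite ?andbF // andbT.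
      by rewrite (leqW h).
    rewrite -[X in _ * X = _]/(Cs b m p') IH (minn_idPr (ltnW him)) expr1.
    by rewrite -mulrA mulrCA.
  rewrite expr0 mul1r (eq_bigl (fun g => ovp_valid g && (ovp_part g 0 <= i)%N)); last first.
    by move=> g; rewrite !andbT.
  by rewrite -[X in _ * X = _]/(Cs b m i) IH (minn_idPr him) mulrC.
rewrite (eq_bigr _ (fun x _ => E x)) {E}.
have -> : forall G : ('I_m.+1 * bool)%type -> R, \sum_(x : ('I_m.+1 * bool)%type) G x = \sum_(i : 'I_m.+1) \sum_(o : bool) G (i, o).
  by move=> G; rewrite pair_big; apply: eq_bigr => -[].
under eq_bigr => i _ do rewrite big_bool /=.
rewrite /Pr /= -/Pr_.
pose G (n : nat) := q ^+ n * (Pr_ b n + t * (if n is p'.+1 then Pr_ b p' else 0)).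
rewrite (eq_bigr (fun i : 'I_m.+1 => if (i <= p)%N then G i else 0)); last first.
  by move=> i _; case: ifP => _; rewrite ?addr0 // /G mulrDr addrC.
rewrite -(big_mkord xpredT (fun i => if (i <= p)%N then G i else 0)) -(big_mkord xpredT G).
rewrite (big_cat_nat _ (n := (minn m p).+1)) //=; last by rewrite ltnS geq_minl.
rewrite [X in _ + X]big1_seq ?addr0; last first.
  move=> i; rewrite mem_index_iota => /andP [h1 h2].
  suff -> : (i <= p)%N = false by [].
  apply/negbTE; rewrite -ltnNge; lia.
rewrite big_seq [RHS]big_seq; apply: eq_bigr => i.
rewrite mem_index_iota => h; suff -> : (i <= p)%N by []; lia.
Qed.

Lemma part_le n m (f : {ffun 'I_n -> 'I_m.+1 * bool}) i : (ovp_part f i <= m)%N.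
Proof. by rewrite /ovp_part; case: insub => // j; rewrite -ltnS ltn_ord. Qed.

Lemma ovbinE (a : int) (k : nat) :
  ovbin q t a k = if (k%:Z <= a) then Pr `|a - k|%N k else 0.
Proof.
rewrite /ovbin /=; case: ifP => // _.
rewrite (eq_bigl (fun f => ovp_valid f && (ovp_part f 0 <= `|a - k|)%N)); last first.
  by move=> f; rewrite part_le andbT.
by rewrite -[LHS]/(Cs k _ _) Cs_Pr minnn.
Qed.

Arguments Pr : simpl never.
Arguments Qr : simpl never.

Lemma QrS M b : Qr M.+1 b = Pr M b. Proof. by []. Qed.
Lemma Qr0 b : Qr 0 b = 0. Proof. by []. Qed.
Lemma QrS0 M : Qr M.+1 0 = 1. Proof. by []. Qed.
Lemma Qr10 k : Qr 1 k = 1. Proof. by rewrite QrS Pr0b. Qed.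

Lemma R1Q M k : Qr M.+1 k.+1 = Qr M k.+1 + q ^+ M * (Qr M.+1 k + t * Qr M k).
Proof.
case: M => [|M]; first by rewrite !Qr10 !Qr0 expr0 mulr0 addr0 mul1r add0r.
by rewrite !QrS PrS.
Qed.

Definition rho j M := Qr M.+1 j.+1 - Qr M.+1 j - q ^+ j.+1 * Qr M j.+1 - t * q ^+ j.+1 * Qr M j.

Lemma rho_eq0 j M : rho j M = 0.
Proof.
elim: j M => [|j IHj] M.
  elim: M => [|M IHM]; first by rewrite /rho !Qr10 !Qr0 !mulr0 !subr0 subrr.
  apply: (etrans _ IHM); rewrite /rho (R1Q M.+1 0) (R1Q M 0) !QrS0.
  case: M {IHM} => [|M]; rewrite ?Qr0 ?QrS0 ?expr0 !exprS ?expr0; ring.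
elim: M => [|M IHM]; first by rewrite /rho !Qr10 !Qr0 !mulr0 !subr0 subrr.
have E : rho j.+1 M.+1 = rho j.+1 M + q ^+ M.+1 * (rho j M.+1 + t * rho j M).
  rewrite /rho (R1Q M.+1 j.+1) (R1Q M.+1 j) (R1Q M j.+1) (R1Q M j) !exprS; ring.
by rewrite E IHM !IHj mulr0 addr0 mulr0 addr0.
Qed.

Definition RELe M k := (q ^+ M.+1 - 1) * Qr M.+2 k
  + (t * q ^+ M.+1 - q ^+ k * q ^+ M.+1 + 1 - t * q ^+ k.+1) * Qr M.+1 k
  + (t * q ^+ k.+1 - t * (q ^+ k * q ^+ M.+1)) * Qr M k.

Lemma REL M k : RELe M k = 0.
Proof.
case: k => [|j].
  rewrite /RELe !QrS0; case: M => [|M]; rewrite ?Qr0 ?QrS0 !exprS ?expr0; ring.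
have -> : RELe M j.+1 =
   -((Qr M.+2 j.+1 - Qr M.+1 j.+1 - q ^+ M.+1 * (Qr M.+2 j + t * Qr M.+1 j))
     + t * q ^+ j.+2 * (Qr M.+1 j.+1 - Qr M j.+1 - q ^+ M * (Qr M.+1 j + t * Qr M j)))
   + q ^+ M.+1 * (rho j M.+1 + t * rho j M).
  by rewrite /RELe /rho !exprS; ring.
rewrite !rho_eq0 (R1Q M.+1 j) (R1Q M j); ring.
Qed.

Local Notation qP := (q%:P : {poly R}).
Local Notation tP := (t%:P : {poly R}).

Definition gf (j : nat) : {poly R} := 1 - qP ^+ j * (qP * 'X).
Definition af (j : nat) : {poly R} := 1 + tP * qP ^+ j * qP ^+ 2 * 'X.
Definition aP k := \prod_(0 <= j < k) af j.
Definition EP lo hi := \prod_(lo <= j < hi) gf j.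

Definition u m k := 'X^k * (qP ^+ (k * k) * qP ^+ k) * aP k * EP k.+1 m.+1 *
  ((Qr (m.+1 - k) k)%:P + tP * qP ^+ k * qP ^+ k * qP ^+ 2 * 'X * (Qr (m - k) k)%:P).
Definition T m := \sum_(k < m.+1) u m k.
Definition Wp m k := 'X^k * (qP ^+ (k * k) * qP ^+ k) * aP k * EP k m *
  ((Qr (m.+1 - k) k)%:P - (Qr (m - k) k)%:P).

Lemma aPS k : aP k.+1 = aP k * af k.
Proof. by rewrite /aP big_nat_recr. Qed.

Lemma polyC_REL M k : (RELe M k)%:P = 0.
Proof. by rewrite REL. Qed.

Lemma step m k : (k <= m.+1)%N -> u m.+1 k - af m * u m k = Wp m.+1 k - Wp m.+1 k.+1.
Proof.
move=> hk.
case: (ltnP k m.+1) => hk2; last first.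
  have -> : k = m.+1 by apply/eqP; rewrite eqn_leq hk hk2.
  have f1 : (m.+2 - m.+1 = 1)%N by lia.
  have f2 : (m.+1 - m.+1 = 0)%N by lia.
  have f3 : (m.+2 - m.+2 = 0)%N by lia.
  have f4 : (m.+1 - m.+2 = 0)%N by lia.
  have f5 : (m - m.+1 = 0)%N by lia.
  rewrite /u /Wp f1 f2 f3 f4 f5 !Qr0 /EP !big_geq // ?leqnSn //.
  by rewrite !polyC0 !(mulr0, addr0, subr0).
have [M' hM] : exists M', m.+1 = (M' + k).+1 by exists (m - k)%N; lia.
set Z := 'X : {poly R}.
have e1 : (m.+2 - k = M'.+2)%N by lia.
have e2 : (m.+1 - k = M'.+1)%N by lia.
have e3 : (m - k = M')%N by lia.
have e4 : (m.+2 - k.+1 = M'.+1)%N by lia.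
have e5 : (m.+1 - k.+1 = M')%N by lia.
have em : m = (M' + k)%N by lia.
suff H : u m.+1 k - af m * u m k - (Wp m.+1 k - Wp m.+1 k.+1) =
   - ('X^(k.+1) * (qP ^+ (k * k) * qP ^+ k * qP ^+ k * qP) * aP k * EP k.+1 m.+1) * (RELe M' k)%:P.
  by move: H; rewrite polyC_REL mulr0 => /eqP; rewrite subr_eq0 => /eqP.
rewrite /u /Wp e1 e2 e3 e4 e5 aPS.
rewrite /EP big_nat_recr //= (big_ltn (m := k)) //= -/(EP k.+1 m.+1).
rewrite R1Q /RELe /gf /af.
rewrite !(polyCD, polyCB, polyCM, polyCN, rmorphXn) /= polyC1.
rewrite (_ : (k.+1 * k.+1 = k * k + k + k + 1)%N); last by lia.
rewrite em !exprD !exprS !exprD.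
ring.
Qed.

Lemma tele (V : zmodType) (f : nat -> V) n : \sum_(k < n) (f k - f k.+1) = f 0%N - f n.
Proof.
elim: n => [|n IH]; first by rewrite big_ord0 subrr.
by rewrite big_ord_recr /= IH addrA subrK.
Qed.

Lemma Id m : T m = aP m.
Proof.
elim: m => [|m IH].
  rewrite /T big_ord1 /u /aP /EP !big_geq // Qr0 QrS0 /= expr0 !mulr1 mulr0 addr0.
  by rewrite mul1r polyC1.
have Tm : T m = \sum_(k < m.+2) u m k.
  rewrite /T [RHS]big_ord_recr /= /u subnn subnS subnn Qr0 polyC0 mulr0 addr0 mulr0.
  by rewrite addr0.
have H : T m.+1 - af m * T m = 0.
  rewrite Tm /T mulr_sumr -sumrB.
  rewrite (eq_bigr (fun k : 'I_m.+2 => Wp m.+1 k - Wp m.+1 k.+1)); last first.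
    by move=> k _; apply: step; rewrite -ltnS.
  have e : (m.+1 - m.+2 = 0)%N by lia.
  rewrite (tele (Wp m.+1)) /Wp !subn0 subnn e !QrS0 Qr0.
  by rewrite !subrr !mulr0 subrr.
move/eqP: H; rewrite subr_eq0 => /eqP ->.
by rewrite IH aPS mulrC.
Qed.

Definition eqN (N : nat) (p r : {poly R}) := forall i, (i <= N)%N -> p`_i = r`_i.

Lemma eqN_refl N p : eqN N p p. Proof. by []. Qed.
Lemma eqN_eq N p r : p = r -> eqN N p r. Proof. by move=> ->. Qed.
Lemma eqN_sym N p r : eqN N p r -> eqN N r p. Proof. by move=> h i hi; rewrite h. Qed.
Lemma eqN_trans N p r s : eqN N p r -> eqN N r s -> eqN N p s.
Proof. by move=> h1 h2 i hi; rewrite h1 ?h2. Qed.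
Lemma eqN_add N p p' r r' : eqN N p p' -> eqN N r r' -> eqN N (p + r) (p' + r').
Proof. by move=> h1 h2 i hi; rewrite !coefD h1 ?h2. Qed.
Lemma eqN_sub N p p' r r' : eqN N p p' -> eqN N r r' -> eqN N (p - r) (p' - r').
Proof. by move=> h1 h2 i hi; rewrite !coefB h1 ?h2. Qed.
Lemma eqN_mul N p p' r r' : eqN N p p' -> eqN N r r' -> eqN N (p * r) (p' * r').
Proof.
move=> h1 h2 i hi; rewrite !coefM; apply: eq_bigr => j _.
have hj : (j <= N)%N by rewrite (leq_trans _ hi) // -ltnS.
by rewrite h1 // h2 // (leq_trans (leq_subr _ _) hi).
Qed.
Lemma eqN_Xn N n p : (N < n)%N -> eqN N ('X^n * p) 0.
Proof. by move=> h i hi; rewrite coefXnM coef0 (leq_ltn_trans hi h). Qed.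
Lemma eqN_sum N (I : Type) (r : seq I) (P : pred I) (F G : I -> {poly R}) :
  (forall i, P i -> eqN N (F i) (G i)) -> eqN N (\sum_(i <- r | P i) F i) (\sum_(i <- r | P i) G i).
Proof.
move=> h i hi; rewrite !coef_sum; apply: eq_bigr => j Pj; exact: h.
Qed.

Definition S N m := \sum_(b < N.+1) (Pr m b)%:P * (qP * 'X) ^+ b.

Lemma GF N m : eqN N (EP 0 m.+1 * S N m) (aP m).
Proof.
elim: m => [|m IH].
  rewrite /EP big_nat1 /aP big_geq // /gf expr0 mul1r /S.
  under eq_bigr => b _ do rewrite Pr0b polyC1 mul1r.
  have -> : (1 - qP * 'X) * \sum_(i < N.+1) (qP * 'X) ^+ i = 1 - 'X^(N.+1) * qP ^+ N.+1.
    by rewrite -[1 - _]opprB mulNr -subrX1 opprB exprMn mulrC.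
  by move=> i hi; rewrite coefB coefXnM ltnS hi subr0.
pose x : {poly R} := qP * 'X.
pose g b := ((Pr m.+1 b)%:P + tP * (Pr m b)%:P) * (x * x ^+ b) * qP ^+ m.+1.
have E1 : S N m.+1 - S N m = \sum_(b < N) g b.
  rewrite /S -sumrB big_ord_recl /= !PrM0 subrr add0r; apply: eq_bigr => b _.
  rewrite /bump add1n -mulrBl -polyCB PrS addrAC subrr add0r /g /x !exprS.
  by rewrite !(polyCD, polyCM, polyC_exp); ring.
have E2 : qP ^+ m.+1 * x * (S N m.+1 + tP * S N m) = \sum_(b < N.+1) g b.
  rewrite /S mulr_sumr -big_split /= mulr_sumr; apply: eq_bigr => b _.
  by rewrite /g /x; ring.
have E3 : gf m.+1 * S N m.+1 - af m * S N m = - g N.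
  have -> : gf m.+1 * S N m.+1 - af m * S N m =
      (S N m.+1 - S N m) - qP ^+ m.+1 * x * (S N m.+1 + tP * S N m).
    by rewrite /gf /af /x !exprS; ring.
  by rewrite E1 E2 big_ord_recr /= opprD addrA subrr add0r.
have E4 : gf m.+1 * S N m.+1 = af m * S N m - g N.
  by rewrite -E3 addrC subrK.
rewrite /EP big_nat_recr //= -/(EP 0 m.+1) -mulrA E4 aPS mulrBr.
rewrite -[X in eqN _ _ X]subr0; apply: eqN_sub.
  rewrite mulrCA mulrC; apply: eqN_mul => //.
have -> : EP 0 m.+1 * g N = 'X^(N.+1) * (EP 0 m.+1 * ((Pr m.+1 N)%:P + tP * (Pr m N)%:P) * qP ^+ N.+1 * qP ^+ m.+1).
  rewrite /g /x -exprS exprMn; ring.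
exact: eqN_Xn.
Qed.

Definition repN N (f : fps R) (p : {poly R}) := forall i, (i <= N)%N -> f i = p`_i.

Lemma rep_c N c : repN N (fps_c c) c%:P.
Proof. by move=> i _; rewrite coefC. Qed.
Lemma rep_z N : repN N fps_z 'X.
Proof. by move=> i _; rewrite coefX. Qed.
Lemma rep_add N f g p r : repN N f p -> repN N g r -> repN N (fps_add f g) (p + r).
Proof. by move=> h1 h2 i hi; rewrite coefD /fps_add h1 ?h2. Qed.
Lemma rep_opp N f p : repN N f p -> repN N (fps_opp f) (- p).
Proof. by move=> h i hi; rewrite coefN /fps_opp h. Qed.
Lemma rep_mul N f g p r : repN N f p -> repN N g r -> repN N (fps_mul f g) (p * r).
Proof.
move=> h1 h2 i hi; rewrite coefM /fps_mul; apply: eq_bigr => j _.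
have hj : (j <= N)%N by rewrite (leq_trans _ hi) // -ltnS.
by rewrite h1 // h2 // (leq_trans (leq_subr _ _) hi).
Qed.
Lemma rep_exp N f p k : repN N f p -> repN N (fps_exp f k) (p ^+ k).
Proof.
move=> h; elim: k => [|k IH]; first by rewrite expr0 -polyC1; exact: rep_c.
by rewrite exprS; apply: rep_mul.
Qed.
Lemma rep_qpoch N x px k : repN N x px ->
  repN N (qpoch x q k) (\prod_(0 <= j < k) (1 - (q ^+ j)%:P * px)).
Proof.
move=> h; rewrite /qpoch /index_iota subn0; elim: (iota 0 k) => [|j s IH] /=.
  by rewrite big_nil -polyC1; exact: rep_c.
rewrite big_cons; apply: rep_mul => //.
rewrite -polyC1; apply: rep_add; first exact: rep_c.
by apply: rep_opp; apply: rep_mul => //; exact: rep_c.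
Qed.
Lemma rep_eqN N (f : fps R) p r : repN N f p -> eqN N p r -> repN N f r.
Proof. by move=> h1 h2 i hi; rewrite h1 ?h2. Qed.
Lemma rep_coef N (f : fps R) p i : repN N f p -> (i <= N)%N -> f i = p`_i.
Proof. by move=> h hi; apply: h. Qed.

Lemma size_inv_seq (f : fps R) n : size (fps_inv_seq f n) = n.+1.
Proof. by elim: n => [|n IH] //=; rewrite size_rcons IH. Qed.
Lemma nth_inv_seq (f : fps R) n i : (i <= n)%N -> nth 0 (fps_inv_seq f n) i = fps_inv f i.
Proof.
elim: n => [|n IH] hi; first by move: hi; rewrite leqn0 => /eqP ->.
case: (ltnP i n.+1) => h.
  by rewrite /= nth_rcons size_inv_seq h IH // -ltnS.
have -> : i = n.+1 by apply/eqP; rewrite eqn_leq hi h.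
by [].
Qed.
Lemma fps_invP (f : fps R) : f 0%N = 1 -> forall n, fps_mul f (fps_inv f) n = (n == 0%N)%:R.
Proof.
move=> f0 [|n]; first by rewrite /fps_mul big_ord1 /fps_inv /= f0 invr1 mulr1.
rewrite /fps_mul big_ord_recl /= subn0 f0 mul1r.
rewrite {1}/fps_inv /= nth_rcons size_inv_seq ltnn eqxx f0 invr1 mulN1r.
rewrite addrC (eq_bigr (fun i : 'I_n.+1 => f i.+1 * nth 0 (fps_inv_seq f n) (n - i))).
  by rewrite subrr.
move=> i _; rewrite /bump /= add1n subSS nth_inv_seq //; exact: leq_subr.
Qed.

Lemma inv_eqN N (f : fps R) p : repN N f p -> f 0%N = 1 ->
  eqN N (p * \poly_(i < N.+1) fps_inv f i) 1.
Proof.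
move=> h f0 i hi.
have hU : repN N (fps_inv f) (\poly_(i < N.+1) fps_inv f i).
  by move=> j hj; rewrite coef_poly ltnS hj.
by rewrite -(rep_mul h hU) // fps_invP // coef1.
Qed.

Lemma ovQ (a k : nat) : ovbin q t (a%:Z - 1) k%:Z = Qr (a - k) k.
Proof.
rewrite ovbinE; case: (ltnP k a) => h.
  have -> : (k%:Z <= a%:Z - 1) = true by apply/idP; lia.
  have -> : (a - k = (a - k - 1).+1)%N by lia.
  by rewrite QrS; congr Pr; lia.
have -> : (k%:Z <= a%:Z - 1) = false by apply/negbTE/negP; lia.
by have -> : (a - k = 0)%N by lia.
Qed.

Lemma ovL (n k : nat) : (0 < n)%N -> ovbin q t (n%:Z + k%:Z - 1) k%:Z = Pr n.-1 k.
Proof.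
move=> hn; rewrite ovbinE.
have -> : (k%:Z <= n%:Z + k%:Z - 1) = true by apply/idP; lia.
by congr Pr; lia.
Qed.

Lemma u_ge m k : (m < k)%N -> u m k = 0.
Proof.
move=> h; rewrite /u.
have -> : (m.+1 - k = 0)%N by lia.
have -> : (m - k = 0)%N by lia.
by rewrite Qr0 polyC0 !mulr0 addr0 mulr0.
Qed.

Lemma prod_coef0 (s : seq nat) (G : nat -> {poly R}) :
  (forall j, (G j)`_0 = 0) -> (\prod_(j <- s) (1 - G j))`_0 = 1.
Proof.
move=> h; elim: s => [|j s IH]; first by rewrite big_nil coef1.
by rewrite big_cons coef0M IH coefB coef1 h subr0 mulr1.
Qed.

Lemma EP_cat a b c : (a <= b)%N -> (b <= c)%N -> EP a c = EP a b * EP b c.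
Proof. by move=> h1 h2; rewrite /EP (big_cat_nat _ (n := b)). Qed.

Lemma main (n : nat) :
  (0 < n)%N ->
  fps_sum (fun k : nat =>
     fps_mul (fps_c (ovbin q t (n%:Z + k%:Z - 1) k%:Z * q ^+ k)) (fps_exp fps_z k))
  =1
  fps_sum (fun k : nat =>
     fps_mul (fps_mul (fps_mul (fps_exp fps_z k) (fps_c (q ^+ (k ^ 2 + k)%N)))
       (fps_mul (qpoch (fps_mul (fps_c (- t * q ^+ 2)) fps_z) q k)
                (fps_inv (qpoch (fps_mul (fps_c q) fps_z) q k.+1))))
     (fps_add (fps_c (ovbin q t (n%:Z - 1) k%:Z))
              (fps_mul (fps_c (t * q ^+ (2 * k + 2)%N * ovbin q t (n%:Z - 2) k%:Z))
                       fps_z))).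
Proof.
move=> hn N; rewrite /fps_sum.
pose Bx : fps R := fps_mul (fps_c q) fps_z.
pose Uk k := \poly_(i < N.+1) fps_inv (qpoch Bx q k.+1) i.
pose AP k := \prod_(0 <= j < k) (1 - (q ^+ j)%:P * ((- t * q ^+ 2)%:P * 'X)).
pose LPk k := (ovbin q t (n%:Z + k%:Z - 1) k%:Z * q ^+ k)%:P * 'X ^+ k.
pose RPk k := 'X ^+ k * (q ^+ (k ^ 2 + k)%N)%:P * (AP k * Uk k) *
   ((ovbin q t (n%:Z - 1) k%:Z)%:P + (t * q ^+ (2 * k + 2)%N * ovbin q t (n%:Z - 2) k%:Z)%:P * 'X).
pose Lf k := fps_mul (fps_c (ovbin q t (n%:Z + k%:Z - 1) k%:Z * q ^+ k)) (fps_exp fps_z k).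
pose Rf k := fps_mul (fps_mul (fps_mul (fps_exp fps_z k) (fps_c (q ^+ (k ^ 2 + k)%N)))
       (fps_mul (qpoch (fps_mul (fps_c (- t * q ^+ 2)) fps_z) q k)
                (fps_inv (qpoch Bx q k.+1))))
     (fps_add (fps_c (ovbin q t (n%:Z - 1) k%:Z))
              (fps_mul (fps_c (t * q ^+ (2 * k + 2)%N * ovbin q t (n%:Z - 2) k%:Z))
                       fps_z)).
change (\sum_(k < N.+1) Lf k N = \sum_(k < N.+1) Rf k N).
have hU : forall k, repN N (fps_inv (qpoch Bx q k.+1)) (Uk k).
  by move=> k j hj; rewrite coef_poly ltnS hj.
have hL : forall k, repN N (Lf k) (LPk k).
  move=> k; apply: rep_mul; first exact: rep_c.
  by apply: rep_exp; exact: rep_z.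
have hR : forall k, repN N (Rf k) (RPk k).
  move=> k; apply: rep_mul; last first.
    by apply: rep_add; [exact: rep_c | apply: rep_mul; [exact: rep_c | exact: rep_z]].
  apply: rep_mul.
    by apply: rep_mul; [apply: rep_exp; exact: rep_z | exact: rep_c].
  apply: rep_mul => //; apply: rep_qpoch; apply: rep_mul; [exact: rep_c | exact: rep_z].
rewrite (eq_bigr _ (fun (k : 'I_N.+1) _ => hL k N (leqnn N))) (eq_bigr _ (fun (k : 'I_N.+1) _ => hR k N (leqnn N))).
rewrite -!coef_sum.
suff : eqN N (\sum_(k < N.+1) LPk k) (\sum_(k < N.+1) RPk k) by move=> h; apply: h.
set K := (N + n).+1.
have hB : forall k, eqN N (EP 0 k.+1 * Uk k) 1.
  move=> k.
  have hp : repN N (qpoch Bx q k.+1) (\prod_(0 <= j < k.+1) (1 - (q ^+ j)%:P * (q%:P * 'X))).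
    by apply: rep_qpoch; apply: rep_mul; [exact: rep_c | exact: rep_z].
  have E : \prod_(0 <= j < k.+1) (1 - (q ^+ j)%:P * (q%:P * 'X)) = EP 0 k.+1.
    by rewrite /EP; apply: eq_bigr => j _; rewrite /gf polyC_exp.
  rewrite -E; apply: inv_eqN => //.
  rewrite (rep_coef hp) // prod_coef0 // => j.
  by rewrite !coef0M coefX /= mulr0n !mulr0.
have hn' : n.-1.+1 = n by rewrite prednK.
have hLP : \sum_(k < N.+1) LPk k = S N n.-1.
  by apply: eq_bigr => k _; rewrite /LPk ovL // polyCM polyC_exp exprMn mulrA.
have C1 : eqN N (EP 0 K * S N n.-1) (EP n K * aP n.-1).
  rewrite (EP_cat (b := n)) //; last by rewrite /K; lia.
  rewrite -mulrA mulrCA; apply: eqN_mul => //.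
  by have := @GF N n.-1; rewrite hn'.
have hAP : forall k, AP k = aP k.
  move=> k; rewrite /AP /aP; apply: eq_bigr => j _.
  by rewrite /af !(polyCM, polyCN, polyC_exp); ring.
have C2 : forall k, (k < N.+1)%N -> eqN N (EP 0 K * RPk k) (EP n K * u n.-1 k).
  move=> k hk.
  rewrite (EP_cat (b := k.+1)) //; last by rewrite /K; lia.
  have -> : EP 0 k.+1 * EP k.+1 K * RPk k = (EP 0 k.+1 * Uk k) *
     (EP k.+1 K * ('X ^+ k * (q ^+ (k ^ 2 + k)%N)%:P * AP k *
      ((ovbin q t (n%:Z - 1) k%:Z)%:P + (t * q ^+ (2 * k + 2)%N * ovbin q t (n%:Z - 2) k%:Z)%:P * 'X))).
    by rewrite /RPk; ring.
  apply: eqN_trans (eqN_mul (hB k) (@eqN_refl N _)) _; rewrite mul1r.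
  have -> : n%:Z - 2 = (n.-1)%:Z - 1 by lia.
  rewrite !ovQ hAP.
  case: (ltnP k n) => hkn.
    rewrite (EP_cat (a := k.+1) (b := n)) //; last by rewrite /K; lia.
    rewrite /u hn' -mulnn (_ : (2 * k + 2 = k + k + 2)%N); last by lia.
    rewrite !(polyCM, polyC_exp, exprD).
    by apply: eqN_eq; ring.
  rewrite u_ge; last by lia.
  have -> : (n - k = 0)%N by lia.
  have -> : (n.-1 - k = 0)%N by lia.
  by rewrite Qr0 mulr0 polyC0 !(mul0r, mulr0, addr0).
have C3 : eqN N (EP 0 K * \sum_(k < N.+1) RPk k) (EP n K * \sum_(k < N.+1) u n.-1 k).
  rewrite !mulr_sumr; apply: eqN_sum => k _; exact: C2 k (ltn_ord k).
have C4 : eqN N (\sum_(k < N.+1) u n.-1 k) (T n.-1).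
  rewrite /T hn' -(big_mkord xpredT (u n.-1)) -(big_mkord xpredT (u n.-1)).
  have e1 : \sum_(0 <= k < N.+1 + n) u n.-1 k = \sum_(0 <= k < N.+1) u n.-1 k + \sum_(N.+1 <= k < N.+1 + n) u n.-1 k.
    by rewrite (big_cat_nat _ (n := N.+1)) //= leq_addr.
  have e2 : \sum_(0 <= k < N.+1 + n) u n.-1 k = \sum_(0 <= k < n) u n.-1 k.
    rewrite (big_cat_nat _ (n := n)) //= ?leq_addl // [X in _ + X]big1_seq ?addr0 //.
    move=> k; rewrite mem_index_iota => /andP [h1 h2]; apply: u_ge; lia.
  have h0 : eqN N (\sum_(N.+1 <= k < N.+1 + n) u n.-1 k) (\sum_(N.+1 <= k < N.+1 + n) (0 : {poly R})).
    rewrite big_seq [X in eqN _ _ X]big_seq; apply: eqN_sum => k; rewrite mem_index_iota => /andP [h1 _].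
    rewrite /u -!mulrA; exact: eqN_Xn.
  rewrite big1_eq in h0.
  rewrite -e2 e1; apply: eqN_trans (eqN_eq (esym (addr0 _))) _; apply: eqN_add => //.
  exact: eqN_sym h0.
have C5 : eqN N (EP 0 K * \sum_(k < N.+1) LPk k) (EP 0 K * \sum_(k < N.+1) RPk k).
  rewrite hLP; apply: eqN_trans C1 _; apply: eqN_sym; apply: eqN_trans C3 _.
  rewrite -(@Id n.-1); apply: eqN_mul => //; exact: C4.
have e1 : forall p, eqN N p (Uk (N + n) * (EP 0 K * p)).
  move=> p; rewrite mulrA [Uk _ * _]mulrC -{1}[p]mul1r; apply: eqN_mul => //.
  exact: eqN_sym (hB _).
apply: eqN_trans (e1 _) _; apply: eqN_trans _ (eqN_sym (e1 _)); apply: eqN_mul => //.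
Qed.

End Comb.

Unset Implicit Arguments.

Theorem theorem1p2 (R : comUnitRingType) (q t : R) (n : nat) :
  (0 < n)%N ->
  fps_sum (fun k : nat =>
     fps_mul (fps_c (ovbin q t (n%:Z + k%:Z - 1) k%:Z * q ^+ k)) (fps_exp fps_z k))
  =1
  fps_sum (fun k : nat =>
     fps_mul (fps_mul (fps_mul (fps_exp fps_z k) (fps_c (q ^+ (k ^ 2 + k)%N)))
       (fps_mul (qpoch (fps_mul (fps_c (- t * q ^+ 2)) fps_z) q k)
                (fps_inv (qpoch (fps_mul (fps_c q) fps_z) q k.+1))))
     (fps_add (fps_c (ovbin q t (n%:Z - 1) k%:Z))
              (fps_mul (fps_c (t * q ^+ (2 * k + 2)%N * ovbin q t (n%:Z - 2) k%:Z))
                       fps_z))).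
Proof. by move=> hn; apply: main. Qed.
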